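(* Let $\mathcal{V}$ be a finite set of nodes, $\mathcal{F}$ a finite set of flows, each flow $f$ with rate $\lambda_f>0$ and path node set $\mathcal{V}_f\subseteq\mathcal{V}$, each node $v$ with capacity $c_v>0$, and assume $\max_f\lambda_f\le\min_v c_v$. Fix $\mathcal{U}\subseteq\mathcal{V}$ and let $OPT(Q2,\mathcal{U})$ be the optimal value of the relaxed allocation problem Q2 for $\mathcal{U}$ (defined in the context). Let $\pi_{\mathrm{GCA}}^{\mathcal{U}}$ be the total rate of flows fully assigned to nodes of $\mathcal{U}$ by the GCA algorithm (defined in the context). Then $\pi_{\mathrm{GCA}}^{\mathcal{U}}\ge\frac13\,OPT(Q2,\mathcal{U})$.
   Context: Problem Q2 for $\mathcal{U}$: maximize $\sum_{f\in\mathcal{F}}\sum_{v\in\mathcal{V}_f\cap\mathcal{U}}\lambda_f^v$ over nonnegative $(\lambda_f^v)$ subject to $\sum_{f}\lambda_f^v\le c_v$ for $v\in\mathcal{U}$, $\lambda_f^v=0$ for $v\notin\mathcal{U}$, and $\sum_{v\in\mathcal{U}}\lambda_f^v\le\lambda_f$ for all $f$. Write $\mathcal{U}_f=\mathcal{V}_f\cap\mathcal{U}$ and $\mathcal{F}_{\mathcal{U}}=\{f:\mathcal{U}_f\ne\emptyset\}$; $c'_v$ denotes the remaining capacity of node $v$ (initially $c_v$). GCA algorithm: sort $\mathcal{F}_{\mathcal{U}}$ in nonincreasing order of rate. Phase I: for each flow $f$ in this order, if some $v\in\mathcal{U}_f$ has $c'_v\ge\lambda_f$, set $\lambda_f^v=\lambda_f$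 for one such $v$ and decrease $c'_v$ by $\lambda_f$. Phase II: for each flow $f$ not yet assigned, in the sorted order, if $\sum_{v\in\mathcal{U}_f}c'_v\ge\lambda_f$, split $f$ and assign it fully to a subset of the nodes of $\mathcal{U}_f$ using their remaining capacities. *)

(* Defs.v *)
From HB Require Import structures.
From mathcomp Require Import all_boot all_order all_algebra.
Set Implicit Arguments. Unset Strict Implicit. Unset Printing Implicit Defensive.
Import Order.TTheory GRing.Theory Num.Theory.
Local Open Scope ring_scope.

Section GCA.
Variables (R : realFieldType) (V F : finType).
Variables (lam : F -> R) (c : V -> R) (Vf : F -> {set V}) (U : {set V}).

Definition Uf (f : F) : {set V} := Vf f :&: U.

Definition FU : {set F} := [set f | Uf f != set0].

Definition decr (cap : V -> R) (v : V) (a : R) : V -> R :=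
  fun w => if w == v then cap w - a else cap w.

(* The choice of node (when several qualify) is nondeterministic. *)
Inductive phase1 : seq F -> (V -> R) -> {set F} -> (V -> R) -> {set F} -> Prop :=
| ph1_nil cap A : phase1 [::] cap A cap A
| ph1_assign (f : F) s (v : V) cap (A : {set F}) cap' (A' : {set F}) :
    v \in Uf f -> lam f <= cap v ->
    phase1 s (decr cap v (lam f)) (f |: A) cap' A' ->
    phase1 (f :: s) cap A cap' A'
| ph1_skip (f : F) s cap (A : {set F}) cap' (A' : {set F}) :
    (forall v, v \in Uf f -> cap v < lam f) ->
    phase1 s cap A cap' A' ->
    phase1 (f :: s) cap A cap' A'.

Inductive phase2 : seq F -> (V -> R) -> {set F} -> {set F} -> Prop :=
| ph2_nil cap A : phase2 [::] cap A A
| ph2_done (f : F) s cap (A A' : {set F}) :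
    f \in A -> phase2 s cap A A' -> phase2 (f :: s) cap A A'
| ph2_split (f : F) s (x : V -> R) cap (A A' : {set F}) :
    f \notin A ->
    lam f <= \sum_(v in Uf f) cap v ->
    (forall v, 0 <= x v <= cap v) ->
    (forall v, v \notin Uf f -> x v = 0) ->
    \sum_v x v = lam f ->
    phase2 s (fun w => cap w - x w) (f |: A) A' ->
    phase2 (f :: s) cap A A'
| ph2_fail (f : F) s cap (A A' : {set F}) :
    f \notin A ->
    \sum_(v in Uf f) cap v < lam f ->
    phase2 s cap A A' ->
    phase2 (f :: s) cap A A'.

(* A is the set of flows fully assigned to nodes of U by some execution of
   GCA (any tie-breaking in the sort, any admissible choices). *)
Definition gca_run (A : {set F}) : Prop :=
  exists s : seq F,
    [/\ perm_eq s (enum FU),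
        sorted (fun f g => lam g <= lam f) s &
        exists (cap1 : V -> R) (A1 : {set F}),
          phase1 s c set0 cap1 A1 /\ phase2 s cap1 A1 A].

Definition pi_gca (A : {set F}) : R := \sum_(f in A) lam f.

Definition q2_feasible (x : F -> V -> R) : Prop :=
  [/\ forall f v, 0 <= x f v,
      forall v, v \in U -> \sum_f x f v <= c v,
      forall f v, v \notin U -> x f v = 0 &
      forall f, \sum_(v in U) x f v <= lam f].

Definition q2_obj (x : F -> V -> R) : R :=
  \sum_f \sum_(v in Uf f) x f v.

End GCA.

(* Main.v *)
Require Import Defs.
From HB Require Import structures.
From mathcomp Require Import all_boot all_order all_algebra.
From mathcomp Require Import lra.
Import Order.TTheory GRing.Theory Num.Theory.
Local Open Scope ring_scope.
Set Implicit Arguments. Unset Strict Implicit.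

Section Pf.
Variables (R : realFieldType) (V F : finType).
Variables (lam : F -> R) (c : V -> R) (Vf : F -> {set V}) (U : {set V}).
Hypothesis hlam : forall f, 0 < lam f.
Hypothesis hmaxmin : forall f v, lam f <= c v.

Lemma sum_sub (T : finType) (P Q : pred T) (G : T -> R) :
  (forall i, P i -> Q i) -> (forall i, Q i -> 0 <= G i) ->
  \sum_(i | P i) G i <= \sum_(i | Q i) G i.
Proof.
move=> PQ G0; rewrite [X in _ <= X](bigID P) /=.
rewrite (eq_bigl P); last by move=> i; case Pi: (P i); rewrite ?andbT ?andbF ?PQ.
rewrite -[X in X <= _]addr0 lerD2l sumr_ge0 // => i /andP[Qi _]; exact: G0.
Qed.

Definition load (A : {set F}) (a : F -> option V) (v : V) : R :=
  \sum_(g in A) (a g == Some v)%:R * lam g.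

Lemma load_ge0 A a v : 0 <= load A a v.
Proof. by apply: sumr_ge0 => g _; rewrite mulr_ge0 ?ler0n // ltW. Qed.

Lemma load_ge (A : {set F}) a v m :
  (forall g, g \in A -> m <= lam g) -> 0 < load A a v -> m <= load A a v.
Proof.
move=> hm hpos.
case: (pickP [pred g | (g \in A) && (a g == Some v)]) => [g /andP[gA agv] | none].
- rewrite /load (bigD1 g) //= agv mul1r -[m]addr0 lerD ?hm //.
  by apply: sumr_ge0 => i _; rewrite mulr_ge0 ?ler0n // ltW.
- move: hpos; rewrite /load big1 ?ltxx // => g gA.
  by move/(_ g): none; rewrite /= gA /= => ->; rewrite mul0r.
Qed.

Lemma ph1 s cap A cap' A' : phase1 lam Vf U s cap A cap' A' ->
  forall a, (forall v, c v - cap v = load A a v) ->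
  (forall g h, g \in A -> h \in s -> lam h <= lam g) ->
  sorted (fun f g => lam g <= lam f) s -> uniq s ->
  (forall h, h \in s -> h \notin A) ->
  exists a', [/\ forall v, c v - cap' v = load A' a' v, A \subset A',
     forall v, cap' v <= cap v &
     forall f, f \in s -> f \notin A' -> forall v, v \in Uf Vf U f ->
       c v <= 2 * (c v - cap' v)].
Proof.
elim => {s cap A cap' A'}.
- move=> cap A a Hinv _ _ _ _; exists a; split=> //.
- move=> f s v cap A cap' A' hv hle _ IH a Hinv Hord Hsort Huniq Hdisj.
  have fA : f \notin A by apply: Hdisj; rewrite inE eqxx.
  move: Huniq => /= /andP[fs Huniq].
  pose a1 := fun g => if g == f then Some v else a g.
  have P1 : forall w, c w - decr cap v (lam f) w = load (f |: A) a1 w.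
    move=> w; rewrite /load big_setU1 //= /a1 eqxx.
    rewrite (eq_bigr (fun g => (a g == Some w)%:R * lam g)); last first.
      move=> g gA; rewrite /a1; case: (eqVneq g f) => [E|//].
      by rewrite E (negbTE fA) in gA.
    rewrite -/(load A a w) -Hinv /decr.
    case: (eqVneq w v) => [->|nwv]; first by rewrite eqxx mul1r; lra.
    have -> : (Some v == Some w) = false.
      by apply/eqP => -[] E; rewrite E eqxx in nwv.
    by rewrite mul0r add0r.
  have P2 : forall g h, g \in f |: A -> h \in s -> lam h <= lam g.
    move=> g h; rewrite in_setU1 => /orP[/eqP -> hs|gA hs].
    * have trans : transitive (fun f g : F => lam g <= lam f).
        by move=> y x z /= h1 h2; apply: le_trans h2 h1.
      by have /allP := order_path_min trans Hsort; apply.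
    * by apply: Hord gA _; rewrite inE hs orbT.
  have P5 : forall h, h \in s -> h \notin f |: A.
    move=> h hs; rewrite in_setU1 negb_or Hdisj ?inE ?hs ?orbT // andbT.
    by apply/eqP => hf; move: fs; rewrite -hf hs.
  have [a' [Hinv' Hsub Hcap Hskip]] := IH a1 P1 P2 (path_sorted Hsort) Huniq P5.
  exists a'; split=> //.
  + exact: subset_trans (subsetU1 f A) Hsub.
  + move=> w; apply: le_trans (Hcap w) _; rewrite /decr; case: eqP => _ //.
    by have := hlam f; lra.
  + move=> h; rewrite inE => /orP[/eqP ->|hs] hA'; last exact: Hskip.
    by move: hA'; rewrite (subsetP Hsub) // in_setU1 eqxx.
- move=> f s cap A cap' A' hlt _ IH a Hinv Hord Hsort Huniq Hdisj.
  move: Huniq => /= /andP[fs Huniq].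
  have [a' [Hinv' Hsub Hcap Hskip]] := IH a Hinv
    (fun g h gA hs => Hord g h gA (@mem_behead _ (f :: s) _ hs)) (path_sorted Hsort) Huniq
    (fun h hs => Hdisj h (@mem_behead _ (f :: s) _ hs)).
  exists a'; split=> //.
  move=> h; rewrite inE => /orP[/eqP ->|hs] hA'; last exact: Hskip.
  move=> w hw.
  have h1 := hlt w hw; have h2 := hmaxmin f w; have h3 := Hinv w; have h4 := Hcap w.
  have h5 : lam f <= load A a w.
    apply: load_ge; first by move=> g gA; apply: Hord gA _; rewrite inE eqxx.
    lra.
  lra.
Qed.

Lemma ph2 s cap A A' : phase2 lam Vf U s cap A A' -> A \subset A'.
Proof.
elim => // {s cap A A'}.
move=> f s x cap A A' _ _ _ _ _ _ IH; exact: subset_trans (subsetU1 f A) IH.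
Qed.

End Pf.

Theorem lemma5 (R : realFieldType) (V F : finType)
  (lam : F -> R) (c : V -> R) (Vf : F -> {set V}) (U : {set V})
  (hlam : forall f, 0 < lam f) (hc : forall v, 0 < c v)
  (hmaxmin : forall f v, lam f <= c v)
  (A : {set F}) (hrun : gca_run lam c Vf U A)
  (x : F -> V -> R) (hx : q2_feasible lam c U x) :
  q2_obj Vf U x <= 3 * pi_gca lam A.
Proof.
case: hrun => s [hperm hsort [cap1 [A1 [hp1 hp2]]]].
case: hx => [x0 xc xU xl].
have Hsub := ph2 hp2.
have I1 : forall v, c v - c v = load lam set0 (fun _ => None) v.
  by move=> v; rewrite subrr /load big1 // => g; rewrite inE.
have I2 : forall g h : F, g \in set0 -> h \in s -> lam h <= lam g.
  by move=> g h; rewrite inE.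
have I3 : uniq s by rewrite (perm_uniq hperm) enum_uniq.
have I4 : forall h : F, h \in s -> h \notin set0 by move=> h _; rewrite inE.
have [a [Hinv _ _ Hskip]] := ph1 hlam hmaxmin hp1 I1 I2 hsort I3 I4.
pose N := [set v | [exists f, (f \notin A) && (v \in Uf Vf U f)]].
have HN : forall v, v \in N -> c v <= 2 * load lam A1 a v.
  move=> v; rewrite inE => /existsP[f /andP[fA vf]].
  have fs : f \in s.
    rewrite (perm_mem hperm) mem_enum inE; apply/set0Pn; by exists v.
  have fA1 : f \notin A1 by apply: contra fA => /(subsetP Hsub).
  by rewrite -Hinv; apply: Hskip vf.
have NU : forall v, v \in N -> v \in U.
  by move=> v; rewrite inE => /existsP[f /andP[_]]; rewrite inE => /andP[].
have Hload : \sum_v load lam A1 a v <= pi_gca lam A.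
  rewrite /load exchange_big /=.
  apply: le_trans (_ : \sum_(g in A1) lam g <= _); last first.
    apply: sum_sub => [g /(subsetP Hsub) //|g _]; exact: ltW.
  apply: ler_sum => g _; rewrite -mulr_suml.
  rewrite -[X in _ <= X]mul1r ler_wpM2r ?(ltW (hlam g)) //.
  case: (a g) => [u|]; last by rewrite big1.
  rewrite (bigD1 u) //= eqxx big1 ?addr0 // => w wu.
  by case: eqP => // -[] E; rewrite E eqxx in wu.
rewrite /q2_obj (bigID (fun f => f \in A)) /=.
have E1 : \sum_(f | f \in A) \sum_(v in Uf Vf U f) x f v <= pi_gca lam A.
  apply: ler_sum => f _; apply: le_trans (xl f).
  apply: sum_sub => [v|v _]; last exact: x0.
  by rewrite inE => /andP[].
have E2 : \sum_(f | f \notin A) \sum_(v in Uf Vf U f) x f v <=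
          2 * pi_gca lam A.
  apply: le_trans (_ : \sum_f \sum_(v in N) x f v <= _).
    apply: le_trans (_ : \sum_(f | f \notin A) \sum_(v in N) x f v <= _).
      apply: ler_sum => f fA; apply: sum_sub => [v vf|v _]; last exact: x0.
      by rewrite inE; apply/existsP; exists f; rewrite fA.
    apply: sum_sub => // f _; apply: sumr_ge0 => v _; exact: x0.
  rewrite exchange_big /=.
  apply: le_trans (_ : \sum_(v in N) c v <= _).
    by apply: ler_sum => v vN; apply: xc; apply: NU.
  apply: le_trans (_ : \sum_(v in N) (2 * load lam A1 a v) <= _).
    by apply: ler_sum => v vN; apply: HN.
  apply: le_trans (_ : \sum_v (2 * load lam A1 a v) <= _).
    apply: sum_sub => // v _; rewrite mulr_ge0 // load_ge0 //.
  rewrite -mulr_sumr ler_wpM2l //.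
lra.
Qed.
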